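(* Let $X$ be a uniform space with base point $x_0$. The end-point projection $\pi_X\colon\widetilde X\to X$ is a uniform covering map if and only if $X$ is a uniform Poincar\'e space.
   Context: $B(x,E)=\{y:(x,y)\in E\}$, $f(E)=\{(f(x),f(y)):(x,y)\in E\}$. $\widetilde X$ is the set of homotopy classes rel. end-points of paths in $X$ starting at $x_0$, $\pi_X([\alpha])=\alpha(1)$, with the basic uniform structure whose base consists of the sets $E^\ast$ of pairs $([\alpha],[\beta])$ such that $\alpha^{-1}\ast\beta$ is homotopic rel. end-points to a path in some $B(z,E)$. A surjection $f$ generates the uniform structure on its range if the sets $f(E)$ form a base of it. The Rips complex $R(X,E)$ has vertex set $X$ and simplices the finite $F$ with $F\times F\subset E$; $f$ is a uniform covering map if it generates the uniform structure on its range and the entourages $E$ for which the induced simplicial map $f_E\colon R(X,E)\to R(Y,f(E))$ is a topological covering map form a base. $X$ is a uniform Poincar\'e space if it is path-connected, uniformly locally path-connected (for each entourage $E$ there is an entourage $F$ such that for all $x$ any two points of $B(x,F)$ are joined by a path in $B(x,E)$) and uniformly semi-locally simply connected (there is an entourage $F$ such that for every $x\in X$ every loop in $B(x,F)$ at $x$ is null-homotopic in $X$). *)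

(* Defs.v *)
From Stdlib Require Import Reals List ClassicalEpsilon.
Import ListNotations.
Open Scope R_scope.


Record UniformSpace := {
  us_car :> Type;
  ent : (us_car -> us_car -> Prop) -> Prop;
  ent_full : ent (fun _ _ => True);
  ent_mono : forall E F, ent E -> (forall x y, E x y -> F x y) -> ent F;
  ent_inter : forall E F, ent E -> ent F -> ent (fun x y => E x y /\ F x y);
  ent_refl : forall E, ent E -> forall x, E x x;
  ent_sym : forall E, ent E -> ent (fun x y => E y x);
  ent_comp : forall E, ent E ->
     exists F, ent F /\ forall x y z, F x y -> F y z -> E x z
}.

Definition ball {A : Type} (x : A) (E : A -> A -> Prop) : A -> Prop := fun y => E x y.

Definition rel_image {A B : Type} (f : A -> B) (E : A -> A -> Prop) : B -> B -> Prop :=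
  fun y1 y2 => exists a b, E a b /\ f a = y1 /\ f b = y2.

(** * Paths, represented as functions R -> X of which only the values on
      [0,1] matter *)
Definition I01 (t : R) : Prop := 0 <= t <= 1.

Definition path_cont (X : UniformSpace) (a : R -> X) : Prop :=
  forall t, I01 t -> forall E, ent X E ->
    exists d, 0 < d /\ forall s, I01 s -> Rabs (s - t) < d -> E (a t) (a s).

Definition path_from (X : UniformSpace) (x y : X) (a : R -> X) : Prop :=
  path_cont X a /\ a 0 = x /\ a 1 = y.

Definition homotopic_rel (X : UniformSpace) (a b : R -> X) : Prop :=
  exists H : R -> R -> X,
    (forall s t, I01 s -> I01 t -> forall E, ent X E ->
       exists d, 0 < d /\ forall s' t', I01 s' -> I01 t' ->
         Rabs (s' - s) < d -> Rabs (t' - t) < d -> E (H s t) (H s' t')) /\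
    (forall s, I01 s -> H s 0 = a s) /\
    (forall s, I01 s -> H s 1 = b s) /\
    (forall t, I01 t -> H 0 t = a 0 /\ H 1 t = a 1).

Definition rev_path {X : Type} (a : R -> X) : R -> X := fun t => a (1 - t).
Definition concat {X : Type} (a b : R -> X) : R -> X :=
  fun t => if Rle_dec t (1/2) then a (2 * t) else b (2 * t - 1).

(** * The space X~ of homotopy classes rel. end-points of paths starting at x0.
      An element is an equivalence class, i.e. a set of paths. *)
Definition is_class (X : UniformSpace) (x0 : X) (C : (R -> X) -> Prop) : Prop :=
  exists a, path_cont X a /\ a 0 = x0 /\
    forall b, C b <-> (path_cont X b /\ b 0 = x0 /\ homotopic_rel X a b).

Definition Xtilde (X : UniformSpace) (x0 : X) : Type :=
  { C : (R -> X) -> Prop | is_class X x0 C }.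

Definition rep (X : UniformSpace) (x0 : X) (C : Xtilde X x0) : R -> X :=
  epsilon (inhabits (fun _ : R => x0)) (fun a => proj1_sig C a).

Definition piX (X : UniformSpace) (x0 : X) (C : Xtilde X x0) : X :=
  rep X x0 C 1.

Definition Estar (X : UniformSpace) (x0 : X) (E : X -> X -> Prop)
  (C D : Xtilde X x0) : Prop :=
  exists a b, proj1_sig C a /\ proj1_sig D b /\
    exists (z : X) (g : R -> X), path_cont X g /\
      (forall t, I01 t -> ball z E (g t)) /\
      homotopic_rel X (concat (rev_path a) b) g.

Definition ent_tilde (X : UniformSpace) (x0 : X)
  (F : Xtilde X x0 -> Xtilde X x0 -> Prop) : Prop :=
  exists E, ent X E /\ forall C D, Estar X x0 E C D -> F C D.

(** A point of |R(A,E)| is a function w : A -> R (barycentric coordinates),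
      non-negative, with finite support which is a simplex, summing to 1. *)
Definition support_in {A : Type} (w : A -> R) (l : list A) : Prop :=
  forall x, w x <> 0 -> In x l.

Definition sumR (l : list R) : R := fold_right Rplus 0 l.

Definition rips_pt {A : Type} (E : A -> A -> Prop) (w : A -> R) : Prop :=
  (forall x, 0 <= w x) /\
  (forall x y, w x <> 0 -> w y <> 0 -> E x y) /\
  exists l, NoDup l /\ support_in w l /\ sumR (map w l) = 1.

(** Weak (CW) topology: U is open iff its trace on every closed simplex is
    open in the standard topology of that simplex. *)
Definition rips_open {A : Type} (E : A -> A -> Prop) (U : (A -> R) -> Prop) : Prop :=
  (forall w, U w -> rips_pt E w) /\
  forall l : list A, (forall x y, In x l -> In y l -> E x y) ->
    forall w, U w -> support_in w l ->
      exists d, 0 < d /\ forall w', rips_pt E w' -> support_in w' l ->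
        (forall x, In x l -> Rabs (w' x - w x) < d) -> U w'.

(** The simplicial map induced by f, extended affinely:
    (push f w)(y) = sum of w(x) over x with f x = y. *)
Definition push {A B : Type} (f : A -> B) (w : A -> R) (y : B) : R :=
  epsilon (inhabits 0)
    (fun r => exists l : list A, NoDup l /\ support_in w l /\
       r = sumR (map (fun x => if excluded_middle_informative (f x = y)
                               then w x else 0) l)).

(** * Topological covering maps between spaces given as subsets P, P'
      of ambient types, with their families of open sets. *)
Definition image {T T' : Type} (p : T -> T') (W : T -> Prop) : T' -> Prop :=
  fun y => exists x, W x /\ p x = y.

Definition top_covering {T T' : Type}
  (P : T -> Prop) (openT : (T -> Prop) -> Prop)
  (P' : T' -> Prop) (openT' : (T' -> Prop) -> Prop) (p : T -> T') : Prop :=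
  (forall x, P x -> P' (p x)) /\
  (forall y, P' y -> exists x, P x /\ p x = y) /\
  (forall V, openT' V -> openT (fun x => P x /\ V (p x))) /\
  forall y, P' y -> exists V, openT' V /\ V y /\
    exists S : (T -> Prop) -> Prop,
      (forall U, S U ->
         openT U /\
         (forall x x', U x -> U x' -> p x = p x' -> x = x') /\
         (forall y', V y' <-> image p U y') /\
         (forall W, openT W -> (forall x, W x -> U x) -> openT' (image p W))) /\
      (forall x, (P x /\ V (p x)) <-> exists U, S U /\ U x) /\
      (forall U U', S U -> S U' -> (exists x, U x /\ U' x) ->
         forall x, U x <-> U' x).

Definition generates {A B : Type}
  (entA : (A -> A -> Prop) -> Prop) (entB : (B -> B -> Prop) -> Prop)
  (f : A -> B) : Prop :=
  (forall y, exists x, f x = y) /\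
  (forall E, entA E -> entB (rel_image f E)) /\
  (forall F, entB F -> exists E, entA E /\
     forall y1 y2, rel_image f E y1 y2 -> F y1 y2).

Definition uniform_covering {A B : Type}
  (entA : (A -> A -> Prop) -> Prop) (entB : (B -> B -> Prop) -> Prop)
  (f : A -> B) : Prop :=
  generates entA entB f /\
  forall F, entA F -> exists E, entA E /\ (forall a b, E a b -> F a b) /\
    top_covering (rips_pt E) (rips_open E)
                 (rips_pt (rel_image f E)) (rips_open (rel_image f E))
                 (push f).

Definition path_connected (X : UniformSpace) : Prop :=
  forall x y : X, exists a, path_from X x y a.

Definition unif_loc_path_connected (X : UniformSpace) : Prop :=
  forall E, ent X E -> exists F, ent X F /\
    forall (x y z : X), ball x F y -> ball x F z ->
      exists a, path_from X y z a /\ forall t, I01 t -> ball x E (a t).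

Definition unif_semiloc_simply_connected (X : UniformSpace) : Prop :=
  exists F, ent X F /\
    forall (x : X) (a : R -> X), path_from X x x a ->
      (forall t, I01 t -> ball x F (a t)) ->
      homotopic_rel X a (fun _ => x).

Definition uniform_Poincare (X : UniformSpace) : Prop :=
  path_connected X /\ unif_loc_path_connected X /\
  unif_semiloc_simply_connected X.

(* Main.v *)
Require Import Defs.
From Stdlib Require Import Reals List ClassicalEpsilon Lra Lia Classical FunctionalExtensionality PropExtensionality ProofIrrelevance.
Import ListNotations.
Open Scope R_scope.

Notation pconcat := Defs.concat.
Definition sq (s t : R) : Prop := I01 s /\ I01 t.

Definition cont2 (X : UniformSpace) (P : R -> R -> Prop) (H : R -> R -> X) : Prop :=
  forall s t, P s t -> forall E, ent X E ->
    exists d, 0 < d /\ forall s' t', P s' t' -> Rabs (s' - s) < d -> Rabs (t' - t) < d -> E (H s t) (H s' t').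

Lemma I01_0 : I01 0. Proof. unfold I01; lra. Qed.
Lemma I01_1 : I01 1. Proof. unfold I01; lra. Qed.
#[global] Hint Resolve I01_0 I01_1 : core.

Lemma cont2_mono X (P Q : R->R->Prop) H : (forall s t, P s t -> Q s t) -> cont2 X Q H -> cont2 X P H.
Proof. intros HPQ HQ s t Hp E HE. destruct (HQ s t (HPQ _ _ Hp) E HE) as [d [Hd Hd']]. exists d; split; auto. Qed.

Lemma cont2_ext X P H H' : (forall s t, P s t -> H s t = H' s t) -> cont2 X P H -> cont2 X P H'.
Proof. intros Heq HH s t Hp E HE. destruct (HH s t Hp E HE) as [d [Hd Hd']]. exists d; split; auto. intros. rewrite <- !Heq; auto. Qed.

Lemma cont2_swap X P H : cont2 X P H -> cont2 X (fun s t => P t s) (fun s t => H t s).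
Proof. intros HH s t Hp E HE. destruct (HH t s Hp E HE) as [d [Hd Hd']]. exists d; split; auto. Qed.

Lemma cont2_comp X P Q H g1 g2 K : cont2 X Q H -> (forall s t, P s t -> Q (g1 s t) (g2 s t)) -> 0 < K ->
  (forall s t s' t', P s t -> P s' t' ->
     Rabs (g1 s' t' - g1 s t) <= K * (Rabs (s' - s) + Rabs (t' - t)) /\
     Rabs (g2 s' t' - g2 s t) <= K * (Rabs (s' - s) + Rabs (t' - t))) ->
  cont2 X P (fun s t => H (g1 s t) (g2 s t)).
Proof.
  intros HH HPQ HK Hl s t Hp E HE.
  destruct (HH _ _ (HPQ s t Hp) E HE) as [d [Hd Hd']].
  exists (d / (2*K+1)). split. apply Rdiv_lt_0_compat; lra.
  intros s' t' Hp' H1 H2. destruct (Hl s t s' t' Hp Hp') as [L1 L2].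
  set (e := d / (2*K+1)) in *.
  assert (He : e * (2*K+1) = d) by (unfold e; field; lra).
  assert (Hsum: K * (Rabs (s'-s) + Rabs (t'-t)) < d).
  { assert (Rabs (s'-s) + Rabs (t'-t) < 2 * e) by lra. nra. }
  apply Hd'; [apply HPQ; auto | lra | lra].
Qed.

Lemma path_cont_cont2 X a : path_cont X a -> cont2 X sq (fun s _ => a s).
Proof. intros Ha s t [Hs Ht] E HE. destruct (Ha s Hs E HE) as [d [Hd H']]. exists d; split; auto. intros s' t' [Hs' _] H1 _. apply H'; auto. Qed.

Lemma cont2_path_cont X H t0 : I01 t0 -> cont2 X sq H -> path_cont X (fun s => H s t0).
Proof. intros Ht HH s Hs E HE. destruct (HH s t0 (conj Hs Ht) E HE) as [d [Hd H']]. exists d; split; auto.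
  intros s' Hs' H1. apply H'; [split; auto| auto | ]. replace (t0 - t0) with 0 by ring; rewrite Rabs_R0; auto. Qed.

Lemma path_cont_ext X a b : (forall s, I01 s -> a s = b s) -> path_cont X a -> path_cont X b.
Proof. intros Heq Ha s Hs E HE. destruct (Ha s Hs E HE) as [d [Hd H']]. exists d; split; auto.
  intros. rewrite <- !Heq; auto. Qed.

Lemma hom_intro X a b H : cont2 X sq H -> (forall s, I01 s -> H s 0 = a s) -> (forall s, I01 s -> H s 1 = b s) ->
  (forall t, I01 t -> H 0 t = a 0 /\ H 1 t = a 1) -> homotopic_rel X a b.
Proof. intros HC H0 H1 He. exists H. split; [|auto]. intros s t Hs Ht E HE.
  destruct (HC s t (conj Hs Ht) E HE) as [d [Hd H']]. exists d; split; auto. intros; apply H'; auto; split; auto. Qed.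

Lemma hom_elim X a b : homotopic_rel X a b -> exists H, cont2 X sq H /\ (forall s, I01 s -> H s 0 = a s) /\
  (forall s, I01 s -> H s 1 = b s) /\ (forall t, I01 t -> H 0 t = a 0 /\ H 1 t = a 1).
Proof. intros [H [HC R]]. exists H; split; auto. intros s t [Hs Ht] E HE.
  destruct (HC s t Hs Ht E HE) as [d [Hd H']]. exists d; split; auto. intros s' t' []; auto. Qed.

Lemma hom_cont_l X a b : homotopic_rel X a b -> path_cont X a.
Proof. intros Hh. destruct (hom_elim _ _ _ Hh) as [H [HC [H0 _]]].
  apply path_cont_ext with (fun s => H s 0); auto. apply cont2_path_cont; auto. Qed.
Lemma hom_cont_r X a b : homotopic_rel X a b -> path_cont X b.
Proof. intros Hh. destruct (hom_elim _ _ _ Hh) as [H [HC [_ [H1 _]]]].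
  apply path_cont_ext with (fun s => H s 1); auto. apply cont2_path_cont; auto. Qed.
Lemma hom_ends X a b : homotopic_rel X a b -> b 0 = a 0 /\ b 1 = a 1.
Proof. intros Hh. destruct (hom_elim _ _ _ Hh) as [H [HC [H0 [H1 He]]]].
  rewrite <- (H1 0) by auto. rewrite <- (H1 1) by auto. split; [apply (He 1)|apply (He 1)]; auto. Qed.

Ltac rabs_elim :=
  repeat match goal with
  | |- context [Rabs ?x] => destruct (Rle_or_lt 0 x); [rewrite (Rabs_pos_eq x) by lra | rewrite (Rabs_left x) by lra]
  | H : context [Rabs ?x] |- _ => destruct (Rle_or_lt 0 x); [rewrite (Rabs_pos_eq x) in H by lra | rewrite (Rabs_left x) in H by lra]
  end.
Ltac rabs_tac := intros; unfold sq, I01 in *; repeat match goal with |- _ /\ _ => split end; rabs_elim; lra.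

Lemma hom_refl X a : path_cont X a -> homotopic_rel X a a.
Proof. intros Ha. apply hom_intro with (fun s _ => a s); auto. apply path_cont_cont2; auto. Qed.

Lemma hom_ext X a b a' b' : (forall s, I01 s -> a s = a' s) -> (forall s, I01 s -> b s = b' s) ->
  homotopic_rel X a b -> homotopic_rel X a' b'.
Proof. intros Ea Eb Hh. destruct (hom_elim _ _ _ Hh) as [H [HC [H0 [H1 He]]]].
  apply hom_intro with H; auto.
  - intros; rewrite <- Ea; auto.
  - intros; rewrite <- Eb; auto.
  - intros; rewrite <- !Ea; auto. Qed.

Lemma hom_sym X a b : homotopic_rel X a b -> homotopic_rel X b a.
Proof. intros Hh. destruct (hom_ends _ _ _ Hh) as [E0 E1].
  destruct (hom_elim _ _ _ Hh) as [H [HC [H0 [H1 He]]]].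
  apply hom_intro with (fun s t => H s (1 - t)).
  - apply (cont2_comp X sq sq H (fun s t => s) (fun s t => 1 - t) 1); auto.
    + intros s t [Hs Ht]; split; auto; unfold I01 in *; lra.
    + lra.
    + rabs_tac.
  - intros; replace (1-0) with 1 by ring; auto.
  - intros; replace (1-1) with 0 by ring; auto.
  - intros t Ht. rewrite E0, E1. apply He. unfold I01 in *; lra.
Qed.

Definition half1 s t := 0 <= s <= 1/2 /\ I01 t.
Definition half2 s t := 1/2 <= s <= 1 /\ I01 t.

Lemma cont2_glue X A B : cont2 X half1 A -> cont2 X half2 B -> (forall t, I01 t -> A (1/2) t = B (1/2) t) ->
  cont2 X sq (fun s t => if Rle_dec s (1/2) then A s t else B s t).
Proof.
  intros HA HB Hs s t [Is It] E HE. unfold I01 in Is.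
  destruct (Rlt_le_dec s (1/2)) as [Hlt|Hge].
  - destruct (HA s t (conj (conj (proj1 Is) (Rlt_le _ _ Hlt)) It) E HE) as [d [Hd H']].
    exists (Rmin d (1/2 - s)). split. apply Rmin_pos; lra.
    intros s' t' [Is' It'] H1 H2.
    pose proof (Rmin_l d (1/2 - s)); pose proof (Rmin_r d (1/2-s)).
    apply Rabs_def2 in H1. unfold I01 in Is'.
    destruct (Rle_dec s (1/2)); [|lra]. destruct (Rle_dec s' (1/2)); [|lra].
    apply H'; [split; [lra|auto]| apply Rabs_def1; lra | eapply Rlt_le_trans; [exact H2|lra]].
  - destruct (Rle_lt_or_eq_dec _ _ Hge) as [Hgt|Heq].
    + destruct (HB s t (conj (conj (Rlt_le _ _ Hgt) (proj2 Is)) It) E HE) as [d [Hd H']].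
      exists (Rmin d (s - 1/2)). split. apply Rmin_pos; lra.
      intros s' t' [Is' It'] H1 H2.
      pose proof (Rmin_l d (s - 1/2)); pose proof (Rmin_r d (s - 1/2)).
      apply Rabs_def2 in H1. unfold I01 in Is'.
      destruct (Rle_dec s (1/2)); [lra|]. destruct (Rle_dec s' (1/2)); [lra|].
      apply H'; [split; [lra|auto]| apply Rabs_def1; lra | eapply Rlt_le_trans; [exact H2|lra]].
    + subst s.
      assert (Q1 : half1 (1/2) t) by (split; auto; lra).
      assert (Q2 : half2 (1/2) t) by (split; auto; lra).
      destruct (HA (1/2) t Q1 E HE) as [d1 [Hd1 H1']].
      destruct (HB (1/2) t Q2 E HE) as [d2 [Hd2 H2']].
      exists (Rmin d1 d2). split. apply Rmin_pos; lra.
      intros s' t' [Is' It'] H1 H2.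
      pose proof (Rmin_l d1 d2); pose proof (Rmin_r d1 d2).
      apply Rabs_def2 in H1. apply Rabs_def2 in H2. unfold I01 in Is'.
      destruct (Rle_dec (1/2) (1/2)); [|lra]. destruct (Rle_dec s' (1/2)).
      * apply H1'; [split; [lra|auto]| |]; apply Rabs_def1; lra.
      * rewrite Hs; auto. apply H2'; [split; [lra|auto]| |]; apply Rabs_def1; lra.
Qed.

Lemma cont2_glue_t X A B : cont2 X (fun s t => I01 s /\ 0 <= t <= 1/2) A -> cont2 X (fun s t => I01 s /\ 1/2 <= t <= 1) B ->
  (forall s, I01 s -> A s (1/2) = B s (1/2)) -> cont2 X sq (fun s t => if Rle_dec t (1/2) then A s t else B s t).
Proof.
  intros HA HB Hs.
  assert (G' : cont2 X sq (fun u v => if Rle_dec u (1/2) then A v u else B v u)).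
  { apply cont2_glue.
    - eapply cont2_mono; [|apply (cont2_swap _ _ _ HA)]. intros u v [? ?]; simpl; split; auto.
    - eapply cont2_mono; [|apply (cont2_swap _ _ _ HB)]. intros u v [? ?]; simpl; split; auto.
    - auto. }
  eapply cont2_mono; [|apply (cont2_swap _ _ _ G')]. intros s t [? ?]; split; auto.
Qed.

Lemma hom_trans X a b c : homotopic_rel X a b -> homotopic_rel X b c -> homotopic_rel X a c.
Proof. intros Hab Hbc. destruct (hom_ends _ _ _ Hab) as [E0 E1].
  destruct (hom_elim _ _ _ Hab) as [H1 [HC1 [H10 [H11 He1]]]].
  destruct (hom_elim _ _ _ Hbc) as [H2 [HC2 [H20 [H21 He2]]]].
  apply hom_intro with (fun s t => if Rle_dec t (1/2) then H1 s (2*t) else H2 s (2*t-1)).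
  - apply cont2_glue_t.
    + apply (cont2_comp X _ sq H1 (fun s t => s) (fun s t => 2*t) 2); auto.
      * intros s t [? ?]; split; auto; unfold I01; lra.
      * lra.
      * rabs_tac.
    + apply (cont2_comp X _ sq H2 (fun s t => s) (fun s t => 2*t-1) 2); auto.
      * intros s t [? ?]; split; auto; unfold I01; lra.
      * lra.
      * rabs_tac.
    + intros s Hs. replace (2*(1/2)) with 1 by field. replace (1-1) with 0 by ring.
      rewrite H11, H20; auto.
  - intros s Hs. destruct (Rle_dec 0 (1/2)); [|lra]. replace (2*0) with 0 by ring; auto.
  - intros s Hs. destruct (Rle_dec 1 (1/2)); [lra|]. replace (2*1-1) with 1 by ring; auto.
  - intros t Ht. destruct (Rle_dec t (1/2)).
    + apply He1; unfold I01 in *; lra.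
    + rewrite <- E0, <- E1. apply He2; unfold I01 in *; lra.
Qed.

Definition lip (K : R) (f : R -> R) := forall s s', I01 s -> I01 s' -> Rabs (f s' - f s) <= K * Rabs (s' - s).

Lemma bound3 A B C u v : 0 <= u <= 1 -> Rabs C <= 1 -> Rabs (A*(1-u) + u*B + v*C) <= Rabs A + Rabs B + Rabs v.
Proof. intros Hu HC.
  eapply Rle_trans; [apply Rabs_triang|]. eapply Rle_trans; [apply Rplus_le_compat_r, Rabs_triang|].
  rewrite !Rabs_mult. rewrite (Rabs_pos_eq (1-u)) by lra. rewrite (Rabs_pos_eq u) by lra.
  pose proof (Rabs_pos A); pose proof (Rabs_pos B); pose proof (Rabs_pos v). nra. Qed.

Lemma hom_line X a f0 f1 K : path_cont X a -> 0 < K -> lip K f0 -> lip K f1 ->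
  (forall s, I01 s -> I01 (f0 s)) -> (forall s, I01 s -> I01 (f1 s)) -> f0 0 = f1 0 -> f0 1 = f1 1 ->
  homotopic_rel X (fun s => a (f0 s)) (fun s => a (f1 s)).
Proof. intros Ha HK L0 L1 I0 I1 E0 E1.
  apply hom_intro with (fun s t => a (f0 s + t * (f1 s - f0 s))).
  - apply (cont2_comp X sq sq (fun u _ => a u) (fun s t => f0 s + t * (f1 s - f0 s)) (fun _ _ => 0) (2*K+1)).
    + apply path_cont_cont2; auto.
    + intros s t [Hs Ht]. split; auto. pose proof (I0 s Hs); pose proof (I1 s Hs). unfold I01 in *. nra.
    + lra.
    + intros s t s' t' [Hs Ht] [Hs' Ht']. split.
      * replace (f0 s' + t' * (f1 s' - f0 s') - (f0 s + t * (f1 s - f0 s))) with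
          ((f0 s' - f0 s)*(1-t') + t' * (f1 s' - f1 s) + (t'-t) * (f1 s - f0 s)) by ring.
        eapply Rle_trans; [apply bound3|].
        { unfold I01 in *; lra. }
        { pose proof (I0 s Hs); pose proof (I1 s Hs). unfold I01 in *. rabs_elim; lra. }
        pose proof (L0 s s' Hs Hs'); pose proof (L1 s s' Hs Hs').
        pose proof (Rabs_pos (s'-s)); pose proof (Rabs_pos (t'-t)). nra.
      * replace (0-0) with 0 by ring. rewrite Rabs_R0. pose proof (Rabs_pos (s'-s)); pose proof (Rabs_pos (t'-t)). nra.
  - intros s Hs. simpl. f_equal. ring.
  - intros s Hs. simpl. f_equal. ring.
  - intros t Ht. rewrite E0, E1. split; f_equal; ring.
Qed.

Lemma hom_concat X a a' b b' : a 1 = b 0 -> homotopic_rel X a a' -> homotopic_rel X b b' ->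
  homotopic_rel X (pconcat a b) (pconcat a' b').
Proof. intros Hab Ha Hb.
  destruct (hom_ends _ _ _ Ha) as [Ea0 Ea1]. destruct (hom_ends _ _ _ Hb) as [Eb0 Eb1].
  destruct (hom_elim _ _ _ Ha) as [H1 [HC1 [H10 [H11 He1]]]].
  destruct (hom_elim _ _ _ Hb) as [H2 [HC2 [H20 [H21 He2]]]].
  apply hom_intro with (fun s t => if Rle_dec s (1/2) then H1 (2*s) t else H2 (2*s-1) t).
  - apply cont2_glue.
    + apply (cont2_comp X _ sq H1 (fun s t => 2*s) (fun s t => t) 2); auto.
      * intros s t [? ?]; split; auto; unfold I01; lra.
      * lra.
      * rabs_tac.
    + apply (cont2_comp X _ sq H2 (fun s t => 2*s-1) (fun s t => t) 2); auto.
      * intros s t [? ?]; split; auto; unfold I01; lra.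
      * lra.
      * rabs_tac.
    + intros t Ht. replace (2*(1/2)) with 1 by field. replace (1-1) with 0 by ring.
      rewrite (proj2 (He1 t Ht)), (proj1 (He2 t Ht)). auto.
  - intros s Hs. unfold pconcat, Defs.concat. destruct (Rle_dec s (1/2)); [apply H10|apply H20]; unfold I01 in *; lra.
  - intros s Hs. unfold pconcat, Defs.concat. destruct (Rle_dec s (1/2)); [apply H11|apply H21]; unfold I01 in *; lra.
  - intros t Ht. unfold pconcat, Defs.concat. destruct (Rle_dec 0 (1/2)); [|lra]. destruct (Rle_dec 1 (1/2)); [lra|].
    replace (2*0) with 0 by ring. replace (2*1-1) with 1 by ring. split; [apply He1|apply He2]; auto.
Qed.

Lemma hom_rev X a a' : homotopic_rel X a a' -> homotopic_rel X (rev_path a) (rev_path a').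
Proof. intros Ha. destruct (hom_elim _ _ _ Ha) as [H1 [HC1 [H10 [H11 He1]]]].
  apply hom_intro with (fun s t => H1 (1-s) t).
  - apply (cont2_comp X _ sq H1 (fun s t => 1-s) (fun s t => t) 1); auto.
    + intros s t [? ?]; split; auto; unfold I01 in *; lra.
    + lra.
    + rabs_tac.
  - intros s Hs. unfold rev_path. apply H10; unfold I01 in *; lra.
  - intros s Hs. unfold rev_path. apply H11; unfold I01 in *; lra.
  - intros t Ht. unfold rev_path. replace (1-0) with 1 by ring. replace (1-1) with 0 by ring.
    split; apply He1; auto.
Qed.

Lemma cont_const (X : UniformSpace) (x : X) : path_cont X (fun _ => x).
Proof. intros t Ht E HE. exists 1. split; [lra|]. intros. apply ent_refl; auto. Qed.

Lemma cont_concat X a b : path_cont X a -> path_cont X b -> a 1 = b 0 -> path_cont X (pconcat a b).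
Proof. intros. eapply hom_cont_l. apply hom_concat; auto; apply hom_refl; auto. Qed.

Lemma cont_rev X a : path_cont X a -> path_cont X (rev_path a).
Proof. intros. eapply hom_cont_l. apply hom_rev; apply hom_refl; auto. Qed.

Lemma hom_reparam X a f K : path_cont X a -> 1 <= K -> lip K f -> (forall s, I01 s -> I01 (f s)) -> f 0 = 0 -> f 1 = 1 ->
  homotopic_rel X (fun s => a (f s)) a.
Proof. intros. apply hom_ext with (fun s => a (f s)) (fun s => a ((fun u => u) s)); auto.
  apply hom_line with K; auto; try lra. intros s s' _ _. pose proof (Rabs_pos (s'-s)). nra. Qed.

Ltac dec_elim := repeat match goal with
  | |- context [Rle_dec ?x ?y] => destruct (Rle_dec x y)
  | H : context [Rle_dec ?x ?y] |- _ => destruct (Rle_dec x y)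
  end.
Ltac lip_tac := unfold lip; intros; unfold I01 in *; dec_elim; rabs_elim; lra.
Ltac I01_tac := intros; unfold I01 in *; dec_elim; lra.

Definition phi_assoc (s : R) := if Rle_dec s (1/4) then 2*s else if Rle_dec s (1/2) then s + 1/4 else s/2 + 1/2.

Lemma hom_assoc X a b c : path_cont X a -> path_cont X b -> path_cont X c -> a 1 = b 0 -> b 1 = c 0 ->
  homotopic_rel X (pconcat (pconcat a b) c) (pconcat a (pconcat b c)).
Proof. intros Ha Hb Hc E1 E2.
  set (R0 := pconcat a (pconcat b c)).
  assert (HR : path_cont X R0).
  { apply cont_concat; auto. apply cont_concat; auto. unfold pconcat, Defs.concat. destruct (Rle_dec 0 (1/2)); [|lra].
    rewrite E1. f_equal; ring. }
  apply hom_ext with (fun s => R0 (phi_assoc s)) R0.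
  - intros s Hs. unfold R0, phi_assoc, pconcat, Defs.concat. unfold I01 in Hs. dec_elim; try lra; try (f_equal; lra).
  - auto.
  - apply hom_reparam with 2; auto; try lra.
    + unfold phi_assoc; lip_tac.
    + unfold phi_assoc; I01_tac.
    + unfold phi_assoc; dec_elim; lra.
    + unfold phi_assoc; dec_elim; lra.
Qed.

Lemma hom_unit_l X a : path_cont X a -> homotopic_rel X (pconcat (fun _ => a 0) a) a.
Proof. intros Ha.
  apply hom_ext with (fun s => a ((fun s => if Rle_dec s (1/2) then 0 else 2*s-1) s)) a; auto.
  - intros s Hs. unfold pconcat, Defs.concat. dec_elim; auto.
  - apply hom_reparam with 2; auto; try lra; [lip_tac|I01_tac|dec_elim; lra|dec_elim; lra].
Qed.

Lemma hom_unit_r X a : path_cont X a -> homotopic_rel X (pconcat a (fun _ => a 1)) a.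
Proof. intros Ha.
  apply hom_ext with (fun s => a ((fun s => if Rle_dec s (1/2) then 2*s else 1) s)) a; auto.
  - intros s Hs. unfold pconcat, Defs.concat. dec_elim; auto.
  - apply hom_reparam with 2; auto; try lra; [lip_tac|I01_tac|dec_elim; lra|dec_elim; lra].
Qed.

Lemma hom_cancel_l X a : path_cont X a -> homotopic_rel X (pconcat (rev_path a) a) (fun _ => a 1).
Proof. intros Ha.
  apply hom_ext with (fun s => a ((fun s => if Rle_dec s (1/2) then 1-2*s else 2*s-1) s)) (fun s => a ((fun _ => 1) s)); auto.
  - intros s Hs. unfold pconcat, Defs.concat, rev_path. dec_elim; auto.
  - apply hom_line with 2; auto; try lra; try lip_tac; try I01_tac; dec_elim; lra.
Qed.

Lemma hom_cancel_r X a : path_cont X a -> homotopic_rel X (pconcat a (rev_path a)) (fun _ => a 0).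
Proof. intros Ha.
  apply hom_ext with (fun s => a ((fun s => if Rle_dec s (1/2) then 2*s else 2-2*s) s)) (fun s => a ((fun _ => 0) s)); auto.
  - intros s Hs. unfold pconcat, Defs.concat, rev_path. dec_elim; auto. f_equal; ring.
  - apply hom_line with 2; auto; try lra; try lip_tac; try I01_tac; dec_elim; lra.
Qed.

Lemma rev_concat_eq X (p q : R -> X) : p 1 = q 0 -> forall s, I01 s ->
  rev_path (pconcat p q) s = pconcat (rev_path q) (rev_path p) s.
Proof. intros E s Hs. unfold rev_path, pconcat, Defs.concat. unfold I01 in Hs. dec_elim; try lra.
  - replace (2*(1-s)) with 1 by lra. replace (1 - 2*s) with 0 by lra. auto.
  - f_equal; ring.
  - f_equal; ring.
Qed.

Lemma rev_rev X (a : R -> X) : forall s, rev_path (rev_path a) s = a s.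
Proof. intros s. unfold rev_path. f_equal; ring. Qed.

Lemma concat_0 (X : UniformSpace) (p q : R -> X) : pconcat p q 0 = p 0.
Proof. unfold pconcat, Defs.concat. destruct (Rle_dec 0 (1/2)); [|lra]. f_equal; ring. Qed.
Lemma concat_1 (X : UniformSpace) (p q : R -> X) : pconcat p q 1 = q 1.
Proof. unfold pconcat, Defs.concat. destruct (Rle_dec 1 (1/2)); [lra|]. f_equal; ring. Qed.
Lemma rev_0 (X : UniformSpace) (p : R -> X) : rev_path p 0 = p 1.
Proof. unfold rev_path. f_equal; ring. Qed.
Lemma rev_1 (X : UniformSpace) (p : R -> X) : rev_path p 1 = p 0.
Proof. unfold rev_path. f_equal; ring. Qed.
Lemma concat_pt (X : UniformSpace) (p p' q q' : R -> X) : (forall s, I01 s -> p s = p' s) -> (forall s, I01 s -> q s = q' s) ->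
  forall s, I01 s -> pconcat p q s = pconcat p' q' s.
Proof. intros Hp Hq s Hs. unfold pconcat, Defs.concat. unfold I01 in *. dec_elim; [apply Hp|apply Hq]; unfold I01; lra. Qed.

#[global] Hint Resolve cont_concat cont_rev cont_const : core.
#[global] Hint Rewrite concat_0 concat_1 rev_0 rev_1 : pth.

Lemma D1 (X : UniformSpace) (a b : R -> X) : path_cont X a -> path_cont X b -> a 1 = b 0 ->
  homotopic_rel X (pconcat (rev_path a) (pconcat a b)) b.
Proof. intros Ha Hb E.
  eapply hom_trans. { apply hom_sym, hom_assoc; auto; autorewrite with pth; auto. }
  eapply hom_trans. { apply hom_concat; [autorewrite with pth; auto| apply hom_cancel_l; auto | apply hom_refl; auto]. }
  rewrite E. apply hom_unit_l; auto.
Qed.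

Lemma D2 (X : UniformSpace) (a b : R -> X) : path_cont X a -> path_cont X b -> a 0 = b 0 ->
  homotopic_rel X (pconcat a (pconcat (rev_path a) b)) b.
Proof. intros Ha Hb E.
  eapply hom_trans. { apply hom_sym, hom_assoc; auto; autorewrite with pth; auto. }
  eapply hom_trans. { apply hom_concat; [autorewrite with pth; auto| apply hom_cancel_r; auto | apply hom_refl; auto]. }
  rewrite E. apply hom_unit_l; auto.
Qed.

Lemma M1 (X : UniformSpace) (a b g : R -> X) : path_cont X a -> path_cont X b -> a 0 = b 0 ->
  homotopic_rel X (pconcat (rev_path a) b) g -> homotopic_rel X b (pconcat a g).
Proof. intros Ha Hb E Hg. pose proof (hom_ends _ _ _ Hg) as [G0 G1]. autorewrite with pth in G0.
  apply hom_sym. eapply hom_trans; [|apply (D2 _ a b); auto].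
  apply hom_concat; [autorewrite with pth; auto | apply hom_refl; auto | apply hom_sym; auto].
Qed.

Lemma M2 (X : UniformSpace) (a b : R -> X) : path_cont X a -> path_cont X b -> a 0 = b 0 ->
  homotopic_rel X (pconcat (rev_path a) b) (fun _ => a 1) -> homotopic_rel X a b.
Proof. intros Ha Hb E Hg. apply hom_sym. eapply hom_trans; [apply (M1 _ a b); eauto|]. apply hom_unit_r; auto. Qed.

Lemma M5 (X : UniformSpace) (a b g : R -> X) : path_cont X a -> path_cont X b -> a 0 = b 0 ->
  homotopic_rel X (pconcat (rev_path a) b) g -> homotopic_rel X (pconcat (rev_path b) a) (rev_path g).
Proof. intros Ha Hb E Hg. pose proof (hom_rev _ _ _ Hg) as Hr.
  eapply hom_ext; [| |exact Hr]; auto.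
  intros s Hs. rewrite rev_concat_eq; auto; [|autorewrite with pth; auto].
  apply concat_pt; auto. intros; apply rev_rev.
Qed.

Lemma M3 (X : UniformSpace) (a1 a2 a3 g12 g13 : R -> X) : path_cont X a1 -> path_cont X a2 -> path_cont X a3 ->
  a1 0 = a2 0 -> a1 0 = a3 0 ->
  homotopic_rel X (pconcat (rev_path a1) a2) g12 -> homotopic_rel X (pconcat (rev_path a1) a3) g13 ->
  homotopic_rel X (pconcat (rev_path a2) a3) (pconcat (rev_path g12) g13).
Proof. intros H1 H2 H3 E2 E3 G12 G13.
  pose proof (hom_ends _ _ _ G12) as [F0 F1]. pose proof (hom_ends _ _ _ G13) as [K0 K1].
  autorewrite with pth in F0, F1, K0, K1.
  pose proof (hom_cont_r _ _ _ G12) as C12. pose proof (hom_cont_r _ _ _ G13) as C13.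
  pose proof (M1 _ _ _ _ H1 H2 E2 G12) as A2. pose proof (M1 _ _ _ _ H1 H3 E3 G13) as A3.
  eapply hom_trans. { apply hom_concat; [autorewrite with pth; congruence | apply hom_rev, A2 | apply A3]. }
  assert (Eq: forall s, I01 s -> pconcat (pconcat (rev_path g12) (rev_path a1)) (pconcat a1 g13) s =
      pconcat (rev_path (pconcat a1 g12)) (pconcat a1 g13) s).
  { apply concat_pt; auto. intros; symmetry; apply rev_concat_eq; congruence. }
  eapply hom_trans.
  { apply (hom_ext X (pconcat (pconcat (rev_path g12) (rev_path a1)) (pconcat a1 g13))
         (pconcat (pconcat (rev_path g12) (rev_path a1)) (pconcat a1 g13))); [exact Eq | intros; reflexivity |].
    assert (P1 : path_cont X (pconcat (rev_path g12) (rev_path a1))) by (apply cont_concat; auto; autorewrite with pth; congruence).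
    assert (P2 : path_cont X (pconcat a1 g13)) by (apply cont_concat; auto; congruence).
    apply hom_refl. apply cont_concat; auto. autorewrite with pth; auto. }
  eapply hom_trans. { apply hom_assoc; auto; autorewrite with pth; congruence. }
  apply hom_concat; [autorewrite with pth; congruence | apply hom_refl; auto |].
  apply D1; auto; congruence.
Qed.

Lemma M4 (X : UniformSpace) (p q : R -> X) : path_cont X p -> path_cont X q -> p 0 = q 0 -> p 1 = q 1 ->
  homotopic_rel X (pconcat p (rev_path q)) (fun _ => p 0) -> homotopic_rel X p q.
Proof. intros Hp Hq E0 E1 Hh.
  assert (A : homotopic_rel X (rev_path p) (rev_path q)).
  { apply M2; auto; [autorewrite with pth; auto|].
    eapply hom_ext; [| |exact Hh].
    - apply concat_pt; auto. intros; symmetry; apply rev_rev.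
    - intros; autorewrite with pth; auto. }
  pose proof (hom_rev _ _ _ A) as B. eapply hom_ext; [| |exact B]; intros; apply rev_rev.
Qed.

Definition cls (X : UniformSpace) (x0 : X) (a : R -> X) : (R -> X) -> Prop :=
  fun b => path_cont X b /\ b 0 = x0 /\ homotopic_rel X a b.

Lemma cls_is_class (X : UniformSpace) (x0 : X) a : path_cont X a -> a 0 = x0 -> is_class X x0 (cls X x0 a).
Proof. intros. exists a. split; auto. split; auto. intros b. unfold cls. tauto. Qed.

Definition mkT (X : UniformSpace) (x0 : X) a (H1 : path_cont X a) (H2 : a 0 = x0) : Xtilde X x0 :=
  exist _ (cls X x0 a) (cls_is_class X x0 a H1 H2).

Lemma mkT_mem (X : UniformSpace) (x0 : X) a H1 H2 : proj1_sig (mkT X x0 a H1 H2) a.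
Proof. simpl. repeat split; auto. apply hom_refl; auto. Qed.


Lemma mem_char (X : UniformSpace) (x0 : X) (C : Xtilde X x0) b : proj1_sig C b -> path_cont X b /\ b 0 = x0.
Proof. destruct C as [C [a [Ha [Ha0 HC]]]]; simpl; intros Hb; apply HC in Hb; tauto. Qed.

Lemma mem_hom (X : UniformSpace) (x0 : X) (C : Xtilde X x0) a b : proj1_sig C a -> proj1_sig C b -> homotopic_rel X a b.
Proof. destruct C as [C [c [Hc [Hc0 HC]]]]; simpl; intros Ha Hb. apply HC in Ha. apply HC in Hb.
  apply hom_trans with c; [apply hom_sym|]; tauto. Qed.

Lemma mem_closed (X : UniformSpace) (x0 : X) (C : Xtilde X x0) a b : proj1_sig C a -> homotopic_rel X a b -> proj1_sig C b.
Proof. destruct C as [C [c [Hc [Hc0 HC]]]]; simpl; intros Ha Hab. apply HC in Ha. destruct Ha as [Ha1 [Ha2 Ha3]].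
  apply HC. destruct (hom_ends _ _ _ Hab). split; [eapply hom_cont_r; eauto|]. split; [congruence|].
  apply hom_trans with a; auto. Qed.

Lemma rep_mem (X : UniformSpace) (x0 : X) (C : Xtilde X x0) : proj1_sig C (rep X x0 C).
Proof. unfold rep. apply epsilon_spec. destruct C as [C [c [Hc [Hc0 HC]]]]; simpl. exists c. apply HC.
  repeat split; auto. apply hom_refl; auto. Qed.

Lemma mem_end (X : UniformSpace) (x0 : X) (C : Xtilde X x0) a : proj1_sig C a -> a 1 = piX X x0 C.
Proof. intros Ha. unfold piX. pose proof (mem_hom _ _ C _ _ Ha (rep_mem _ _ C)) as Hh.
  destruct (hom_ends _ _ _ Hh); auto. Qed.

Lemma T_eq (X : UniformSpace) (x0 : X) (C D : Xtilde X x0) a b : proj1_sig C a -> proj1_sig D b -> homotopic_rel X a b -> C = D.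
Proof. intros Ha Hb Hab.
  assert (E : proj1_sig C = proj1_sig D).
  { apply functional_extensionality. intros c. apply propositional_extensionality. split; intros Hc.
    - apply (mem_closed _ _ D b); auto. eapply hom_trans; [apply hom_sym, Hab|]. apply (mem_hom _ _ C); auto.
    - apply (mem_closed _ _ C a); auto. eapply hom_trans; [apply Hab|]. apply (mem_hom _ _ D); auto. }
  destruct C as [C pC], D as [D pD]. simpl in E. subst. f_equal. apply proof_irrelevance. Qed.

Lemma Estar_get (X : UniformSpace) (x0 : X) E (C D : Xtilde X x0) a b : Estar X x0 E C D -> proj1_sig C a -> proj1_sig D b ->
  exists z g, path_cont X g /\ (forall t, I01 t -> E z (g t)) /\ homotopic_rel X (pconcat (rev_path a) b) g.
Proof. intros [a' [b' [Ha' [Hb' [z [g [Hg [Hz Hh]]]]]]]] Ha Hb. exists z, g. split; auto. split; auto.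
  eapply hom_trans; [|exact Hh]. apply hom_concat.
  - rewrite rev_1. destruct (mem_char _ _ C a); destruct (mem_char _ _ D b); congruence.
  - apply hom_rev. apply (mem_hom _ _ C); auto.
  - apply (mem_hom _ _ D); auto.
Qed.

Lemma Estar_intro (X : UniformSpace) (x0 : X) E (C D : Xtilde X x0) a b z g : proj1_sig C a -> proj1_sig D b ->
  path_cont X g -> (forall t, I01 t -> E z (g t)) -> homotopic_rel X (pconcat (rev_path a) b) g -> Estar X x0 E C D.
Proof. intros. exists a, b. repeat split; auto. exists z, g. auto. Qed.

Lemma Estar_mono (X : UniformSpace) (x0 : X) (E E' : X -> X -> Prop) (C D : Xtilde X x0) : (forall x y, E x y -> E' x y) ->
  Estar X x0 E C D -> Estar X x0 E' C D.
Proof. intros HE [a [b [Ha [Hb [z [g [Hg [Hz Hh]]]]]]]]. exists a, b. repeat split; auto. exists z, g. unfold ball in *. auto. Qed.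

Lemma Estar_refl (X : UniformSpace) (x0 : X) E (C : Xtilde X x0) : ent X E -> Estar X x0 E C C.
Proof. intros HE. pose proof (rep_mem _ _ C) as Hr. destruct (mem_char _ _ C _ Hr) as [Hc H0].
  apply Estar_intro with (rep X x0 C) (rep X x0 C) (rep X x0 C 1) (fun _ => rep X x0 C 1); auto.
  - intros; apply ent_refl; auto.
  - apply hom_cancel_l; auto.
Qed.

Lemma Estar_sym (X : UniformSpace) (x0 : X) E (C D : Xtilde X x0) : Estar X x0 E C D -> Estar X x0 E D C.
Proof. intros [a [b [Ha [Hb [z [g [Hg [Hz Hh]]]]]]]].
  destruct (mem_char _ _ C _ Ha); destruct (mem_char _ _ D _ Hb).
  apply Estar_intro with b a z (rev_path g); [exact Hb | exact Ha | apply cont_rev; auto | |].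
  - intros t Ht. unfold rev_path. apply Hz. unfold I01 in *; lra.
  - apply M5; auto; congruence.
Qed.

Lemma concat_pts (X : UniformSpace) (p q : R -> X) s : I01 s -> exists u, I01 u /\ (pconcat p q s = p u \/ pconcat p q s = q u).
Proof. intros Hs. unfold pconcat, Defs.concat, I01 in *. destruct (Rle_dec s (1/2)).
  - exists (2*s). split; [lra|auto].
  - exists (2*s-1). split; [lra|auto]. Qed.

Definition USLSC_F (X : UniformSpace) (F : X -> X -> Prop) : Prop :=
  forall (x : X) (a : R -> X), path_from X x x a -> (forall t, I01 t -> ball x F (a t)) -> homotopic_rel X a (fun _ => x).

Definition small (X : UniformSpace) (F E0 : X -> X -> Prop) : Prop :=
  ent X E0 /\ (forall x y, E0 x y -> E0 y x) /\ (forall x y z u v, E0 x y -> E0 y z -> E0 z u -> E0 u v -> F x v).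

Lemma Linj (X : UniformSpace) (x0 : X) F E0 (C D : Xtilde X x0) : USLSC_F X F -> small X F E0 ->
  Estar X x0 E0 C D -> piX X x0 C = piX X x0 D -> C = D.
Proof. intros HS [HE [Hsym H4]] HCD Hp.
  pose proof (rep_mem _ _ C) as Ra. pose proof (rep_mem _ _ D) as Rb.
  set (a := rep X x0 C) in *. set (b := rep X x0 D) in *.
  destruct (Estar_get _ _ _ _ _ _ _ HCD Ra Rb) as [z [g [Hg [Hz Hh]]]].
  destruct (hom_ends _ _ _ Hh) as [G0 G1]. autorewrite with pth in G0, G1.
  pose proof (mem_end _ _ _ _ Ra) as Ea. pose proof (mem_end _ _ _ _ Rb) as Eb.
  destruct (mem_char _ _ _ _ Ra) as [Ca A0]. destruct (mem_char _ _ _ _ Rb) as [Cb B0].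
  assert (Hl : homotopic_rel X g (fun _ => piX X x0 C)).
  { apply HS. split; auto. split; congruence.
    intros t Ht. unfold ball. rewrite <- Ea, <- G0. apply H4 with z (g t) (g t).
    - apply Hsym, Hz; auto.
    - apply Hz; auto.
    - apply ent_refl; auto.
    - apply ent_refl; auto. }
  apply (T_eq _ _ C D a b); auto. apply M2; auto; [congruence|].
  rewrite Ea. eapply hom_trans; eauto.
Qed.

Lemma Lmain (X : UniformSpace) (x0 : X) F E0 (C1 C2 C3 : Xtilde X x0) : USLSC_F X F -> small X F E0 ->
  Estar X x0 E0 C1 C2 -> Estar X x0 E0 C1 C3 -> rel_image (piX X x0) (Estar X x0 E0) (piX X x0 C2) (piX X x0 C3) ->
  Estar X x0 E0 C2 C3.
Proof. intros HS [HE [Hsym H4]] H12 H13 [D2 [D3 [H23 [P2 P3]]]].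
  pose proof (rep_mem _ _ C1) as R1. pose proof (rep_mem _ _ C2) as R2. pose proof (rep_mem _ _ C3) as R3.
  pose proof (rep_mem _ _ D2) as S2. pose proof (rep_mem _ _ D3) as S3.
  set (a1 := rep X x0 C1) in *. set (a2 := rep X x0 C2) in *. set (a3 := rep X x0 C3) in *.
  set (d2 := rep X x0 D2) in *. set (d3 := rep X x0 D3) in *.
  destruct (Estar_get _ _ _ _ _ _ _ H12 R1 R2) as [z12 [g12 [Hg12 [Hz12 Hh12]]]].
  destruct (Estar_get _ _ _ _ _ _ _ H13 R1 R3) as [z13 [g13 [Hg13 [Hz13 Hh13]]]].
  destruct (Estar_get _ _ _ _ _ _ _ H23 S2 S3) as [z23 [g23 [Hg23 [Hz23 Hh23]]]].
  destruct (hom_ends _ _ _ Hh12) as [G120 G121]. autorewrite with pth in G120, G121.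
  destruct (hom_ends _ _ _ Hh13) as [G130 G131]. autorewrite with pth in G130, G131.
  destruct (hom_ends _ _ _ Hh23) as [G230 G231]. autorewrite with pth in G230, G231.
  pose proof (mem_end _ _ _ _ R1) as E1. pose proof (mem_end _ _ _ _ R2) as E2. pose proof (mem_end _ _ _ _ R3) as E3.
  pose proof (mem_end _ _ _ _ S2) as F2. pose proof (mem_end _ _ _ _ S3) as F3.
  destruct (mem_char _ _ _ _ R1) as [C1c C10]. destruct (mem_char _ _ _ _ R2) as [C2c C20].
  destruct (mem_char _ _ _ _ R3) as [C3c C30].
  pose proof (M3 _ a1 a2 a3 g12 g13 C1c C2c C3c ltac:(congruence) ltac:(congruence) Hh12 Hh13) as Hm.
  set (p := pconcat (rev_path g12) g13).
  assert (Cp : path_cont X p) by (apply cont_concat; auto; autorewrite with pth; congruence).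
  assert (Hpq : homotopic_rel X p g23).
  { apply M4; auto.
    - unfold p. autorewrite with pth. congruence.
    - unfold p. autorewrite with pth. congruence.
    - unfold p at 2. autorewrite with pth.
      assert (Hx : g12 1 = piX X x0 C2) by congruence. rewrite Hx.
      apply HS.
      + assert (Cl : path_cont X (pconcat p (rev_path g23))).
        { apply cont_concat; auto. unfold p; autorewrite with pth; congruence. }
        split; auto. unfold p. autorewrite with pth. split; congruence.
      + intros t Ht. unfold ball.
        assert (B12 : forall u, I01 u -> F (piX X x0 C2) (g12 u)).
        { intros u Hu. rewrite <- Hx. apply H4 with z12 (g12 u) (g12 u); [apply Hsym, Hz12; auto|apply Hz12; auto|apply ent_refl; auto|apply ent_refl; auto]. }
        assert (B13 : forall u, I01 u -> F (piX X x0 C2) (g13 u)).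
        { intros u Hu. rewrite <- Hx. apply H4 with z12 (g12 0) z13; [apply Hsym, Hz12; auto|apply Hz12; auto| |apply Hz13; auto].
          rewrite G120, <- G130. apply Hsym, Hz13; auto. }
        assert (B23 : forall u, I01 u -> F (piX X x0 C2) (g23 u)).
        { intros u Hu. rewrite <- P2, <- F2, <- G230. apply H4 with z23 (g23 u) (g23 u); [apply Hsym, Hz23; auto|apply Hz23; auto|apply ent_refl; auto|apply ent_refl; auto]. }
        destruct (concat_pts _ p (rev_path g23) t Ht) as [u [Hu [Eu|Eu]]]; rewrite Eu.
        * unfold p. destruct (concat_pts _ (rev_path g12) g13 u Hu) as [v [Hv [Ev|Ev]]]; rewrite Ev.
          -- unfold rev_path. apply B12. unfold I01 in *; lra.
          -- apply B13; auto.
        * unfold rev_path. apply B23. unfold I01 in *; lra. }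
  apply Estar_intro with a2 a3 z23 g23; auto. eapply hom_trans; eauto.
Qed.

Definition emd {A : Type} (x y : A) : {x = y} + {x <> y} := excluded_middle_informative (x = y).

Lemma sumR_app (l1 l2 : list R) : sumR (l1 ++ l2) = sumR l1 + sumR l2.
Proof. induction l1; simpl; [ring|rewrite IHl1; ring]. Qed.

Lemma sumR_zero {A} (h : A -> R) l : (forall x, In x l -> h x = 0) -> sumR (map h l) = 0.
Proof. induction l; simpl; intros H; auto. rewrite H, IHl; auto. ring. Qed.

Lemma sumR_ext {A} (h h' : A -> R) l : (forall x, In x l -> h x = h' x) -> sumR (map h l) = sumR (map h' l).
Proof. intros; f_equal; apply map_ext_in; auto. Qed.

Lemma sum_ext {A} (l l' : list A) : NoDup l -> NoDup l' -> forall h : A -> R,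
  (forall x, h x <> 0 -> In x l) -> (forall x, h x <> 0 -> In x l') -> sumR (map h l) = sumR (map h l').
Proof. revert l'. induction l as [|x l IH]; intros l' N N' h H1 H2.
  - simpl. symmetry. apply sumR_zero. intros y _. destruct (Req_dec (h y) 0); auto. apply H1 in H. contradiction.
  - inversion N; subst. simpl.
    destruct (Req_dec (h x) 0) as [Z|NZ].
    + rewrite Z, Rplus_0_l. apply IH; auto. intros y Hy. destruct (H1 y Hy); auto. subst; contradiction.
    + destruct (in_split x l' (H2 x NZ)) as [l1 [l2 El]]. subst l'.
      pose proof (NoDup_remove_1 _ _ _ N') as N1. pose proof (NoDup_remove_2 _ _ _ N') as N2.
      rewrite map_app, sumR_app. simpl.
      set (h' := fun y => if emd y x then 0 else h y).
      assert (S1 : sumR (map h l) = sumR (map h' l)).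
      { apply sumR_ext. intros y Hy. unfold h'. destruct (emd y x); auto. subst; contradiction. }
      assert (S2 : sumR (map h (l1 ++ l2)) = sumR (map h' (l1 ++ l2))).
      { apply sumR_ext. intros y Hy. unfold h'. destruct (emd y x); auto. subst; contradiction. }
      rewrite map_app, sumR_app in S2.
      rewrite S1. rewrite (IH (l1 ++ l2) H4 N1 h').
      * rewrite <- S2. ring.
      * intros y Hy. unfold h' in Hy. destruct (emd y x); [lra|]. destruct (H1 y Hy); auto. congruence.
      * intros y Hy. unfold h' in Hy. destruct (emd y x); [lra|]. pose proof (H2 y Hy) as Hin.
        apply in_app_or in Hin. apply in_or_app. destruct Hin as [|[|]]; auto. congruence.
Qed.

Definition pushsum {A B} (f : A -> B) (w : A -> R) (y : B) (l : list A) : R :=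
  sumR (map (fun x => if excluded_middle_informative (f x = y) then w x else 0) l).

Lemma push_eq {A B} (f : A -> B) (w : A -> R) l y : NoDup l -> support_in w l -> push f w y = pushsum f w y l.
Proof. intros N S. unfold push.
  assert (Ex : exists r, exists l0 : list A, NoDup l0 /\ support_in w l0 /\
       r = sumR (map (fun x => if excluded_middle_informative (f x = y) then w x else 0) l0)).
  { exists (pushsum f w y l), l. auto. }
  destruct (epsilon_spec (inhabits 0) _ Ex) as [l0 [N0 [S0 E0]]].
  rewrite E0. unfold pushsum. apply sum_ext; auto.
  - intros x Hx. destruct (excluded_middle_informative (f x = y)); [|lra]. apply S0; auto.
  - intros x Hx. destruct (excluded_middle_informative (f x = y)); [|lra]. apply S; auto.
Qed.

Lemma sum_nonneg {A} (h : A -> R) l : (forall x, In x l -> 0 <= h x) -> 0 <= sumR (map h l).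
Proof. induction l; simpl; intros H; [lra|]. pose proof (H a (or_introl eq_refl)). assert (0 <= sumR (map h l)) by auto. lra. Qed.

Lemma sum_nz {A} (h : A -> R) l : sumR (map h l) <> 0 -> exists x, In x l /\ h x <> 0.
Proof. intros H. destruct (classic (exists x, In x l /\ h x <> 0)) as [|N]; auto.
  exfalso. apply H. apply sumR_zero. intros x Hx. destruct (Req_dec (h x) 0); auto. exfalso; apply N; eauto. Qed.

Lemma sumR_plus {A} (g h : A -> R) l : sumR (map (fun y => g y + h y) l) = sumR (map g l) + sumR (map h l).
Proof. induction l; simpl; [ring|rewrite IHl; ring]. Qed.

Lemma sumR_minus {A} (g h : A -> R) l : sumR (map (fun y => g y - h y) l) = sumR (map g l) - sumR (map h l).
Proof. induction l; simpl; [ring|rewrite IHl; ring]. Qed.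

Lemma sum_swap {A B} (k : A -> B -> R) (l : list A) (L : list B) :
  sumR (map (fun y => sumR (map (fun x => k x y) l)) L) = sumR (map (fun x => sumR (map (fun y => k x y) L)) l).
Proof. induction l; simpl.
  - apply sumR_zero; auto.
  - rewrite sumR_plus. rewrite IHl. auto. Qed.

Lemma sum_ind_in {A} (a : A) c l : NoDup l -> In a l -> sumR (map (fun y => if excluded_middle_informative (a = y) then c else 0) l) = c.
Proof. intros N Hin. destruct (in_split a l Hin) as [l1 [l2 El]]. subst l.
  pose proof (NoDup_remove_2 _ _ _ N) as N2.
  rewrite map_app, sumR_app. simpl. destruct (excluded_middle_informative (a = a)); [|congruence].
  rewrite !sumR_zero; [ring| |]; intros y Hy; destruct (excluded_middle_informative (a = y)); auto; subst;
  exfalso; apply N2; apply in_or_app; auto. Qed.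

Lemma sum_ind_nin {A} (a : A) c l : ~ In a l -> sumR (map (fun y => if excluded_middle_informative (a = y) then c else 0) l) = 0.
Proof. intros N. apply sumR_zero. intros y Hy. destruct (excluded_middle_informative (a = y)); auto. subst; contradiction. Qed.

Lemma sum_abs_bound {A} (h : A -> R) l M : (forall x, In x l -> Rabs (h x) <= M) -> Rabs (sumR (map h l)) <= INR (length l) * M.
Proof. induction l; intros H.
  - simpl. rewrite Rabs_R0. lra.
  - replace (sumR (map h (a::l))) with (h a + sumR (map h l)) by reflexivity.
    replace (INR (length (a::l))) with (INR (length l) + 1) by (simpl length; rewrite S_INR; ring).
    eapply Rle_trans; [apply Rabs_triang|].
    pose proof (H a (or_introl eq_refl)). assert (Rabs (sumR (map h l)) <= INR (length l) * M) by (apply IHl; intros; apply H; simpl; auto). lra. Qed.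

Lemma push_nz {A B} (f : A -> B) w l y : NoDup l -> support_in w l -> push f w y <> 0 ->
  exists x, In x l /\ f x = y /\ w x <> 0.
Proof. intros N S H. rewrite (push_eq f w l y N S) in H. unfold pushsum in H.
  destruct (sum_nz _ _ H) as [x [Hx Hn]]. destruct (excluded_middle_informative (f x = y)); [|lra].
  exists x; auto. Qed.

Lemma push_pt {A B} (f : A -> B) E w : rips_pt E w -> rips_pt (rel_image f E) (push f w).
Proof. intros [Hnn [Hpair [l [N [S Hs]]]]].
  assert (PE : forall y, push f w y = pushsum f w y l) by (intros; apply push_eq; auto).
  split; [|split].
  - intros y. rewrite PE. apply sum_nonneg. intros x _. destruct (excluded_middle_informative (f x = y)); [apply Hnn|lra].
  - intros y1 y2 H1 H2. destruct (push_nz f w l y1 N S H1) as [x1 [_ [E1 W1]]].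
    destruct (push_nz f w l y2 N S H2) as [x2 [_ [E2 W2]]]. exists x1, x2. auto.
  - exists (nodup emd (map f l)). split; [apply NoDup_nodup|split].
    + intros y Hy. destruct (push_nz f w l y N S Hy) as [x [Hx [Ex _]]]. apply nodup_In. subst. apply in_map; auto.
    + rewrite <- Hs. unfold pushsum.
      transitivity (sumR (map (fun y => sumR (map (fun x => (fun x y => if excluded_middle_informative (f x = y) then w x else 0) x y) l)) (nodup emd (map f l)))).
      { apply sumR_ext. intros y _. apply PE. }
      rewrite sum_swap. apply sumR_ext. intros x Hx. simpl.
      transitivity (sumR (map (fun y => if excluded_middle_informative (f x = y) then w x else 0) (nodup emd (map f l)))); auto.
      apply sum_ind_in. apply NoDup_nodup. apply nodup_In, in_map; auto.
Qed.

Lemma pushval {A B} (f : A -> B) E w c x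
  (HInj : forall c a a', E c a -> E c a' -> f a = f a' -> a = a') :
  rips_pt E w -> w c <> 0 -> E c x -> push f w (f x) = w x.
Proof. intros [Hnn [Hpair [l [N [S Hs]]]]] Hc Hx. rewrite (push_eq f w l (f x) N S). unfold pushsum.
  transitivity (sumR (map (fun x' => if excluded_middle_informative (x = x') then w x else 0) l)).
  - apply sumR_ext. intros x' Hx'. destruct (excluded_middle_informative (f x' = f x)) as [Ef|Nf].
    + destruct (Req_dec (w x') 0) as [Z|NZ].
      * destruct (excluded_middle_informative (x = x')); subst; auto.
      * assert (x' = x) by (apply (HInj c); auto). subst. destruct (excluded_middle_informative (x = x)); congruence.
    + destruct (excluded_middle_informative (x = x')); subst; congruence.
  - destruct (in_dec emd x l) as [I|NI].
    + apply sum_ind_in; auto.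
    + rewrite sum_ind_nin; auto. destruct (Req_dec (w x) 0); auto. exfalso; apply NI, S; auto.
Qed.

Definition liftpt {A B} (f : A -> B) (E : A -> A -> Prop) (c : A) (v : B -> R) : A -> R :=
  fun x => if excluded_middle_informative (E c x) then v (f x) else 0.

Definition nzb {B} (v : B -> R) (y : B) : bool := if Req_EM_T (v y) 0 then false else true.

Lemma nzb_true {B} (v : B -> R) y : nzb v y = true <-> v y <> 0.
Proof. unfold nzb. destruct (Req_EM_T (v y) 0); split; intros; congruence || auto. Qed.

Lemma lift_props {A B} (f : A -> B) E c v
  (HRefl : forall a, E a a)
  (HInj : forall c a a', E c a -> E c a' -> f a = f a' -> a = a')
  (HTri : forall c a a', E c a -> E c a' -> rel_image f E (f a) (f a') -> E a a')
  (HLift : forall c y, rel_image f E (f c) y -> exists a, E c a /\ f a = y) :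
  rips_pt (rel_image f E) v -> v (f c) <> 0 -> rips_pt E (liftpt f E c v) /\ push f (liftpt f E c v) = v.
Proof. intros [Hnn [Hpair [s [N [S Hs]]]]] Hc.
  set (lf := fun y => epsilon (inhabits c) (fun a => E c a /\ f a = y)).
  assert (Hlf : forall y, v y <> 0 -> E c (lf y) /\ f (lf y) = y).
  { intros y Hy. apply (epsilon_spec (inhabits c) (fun a => E c a /\ f a = y)). apply HLift. apply Hpair; auto. }
  set (s0 := filter (nzb v) s).
  assert (Ins0 : forall y, In y s0 <-> v y <> 0).
  { intros y. unfold s0. rewrite filter_In, nzb_true. split; [tauto|]. intros; split; auto. }
  assert (N0 : NoDup s0) by (apply NoDup_filter; auto).
  assert (Sum0 : sumR (map v s0) = 1).
  { rewrite <- Hs. apply (sum_ext s0 s N0 N v); intros y Hy; [apply Ins0; auto|apply S; auto]. }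
  assert (Key : forall x, liftpt f E c v x <> 0 -> E c x /\ v (f x) <> 0 /\ lf (f x) = x).
  { intros x Hx. unfold liftpt in Hx. destruct (excluded_middle_informative (E c x)) as [Ex|]; [|lra].
    split; auto. split; auto. destruct (Hlf (f x) Hx) as [A1 A2]. apply (HInj c); auto. }
  assert (NL : NoDup (map lf s0)).
  { apply NoDup_map_NoDup_ForallPairs; auto. intros a b Ha Hb Hab.
    apply Ins0 in Ha. apply Ins0 in Hb. destruct (Hlf a Ha) as [_ Fa]. destruct (Hlf b Hb) as [_ Fb]. congruence. }
  assert (SL : support_in (liftpt f E c v) (map lf s0)).
  { intros x Hx. destruct (Key x Hx) as [_ [Hv Hl]]. rewrite <- Hl. apply in_map. apply Ins0; auto. }
  assert (LV : forall y, In y s0 -> liftpt f E c v (lf y) = v y).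
  { intros y Hy. apply Ins0 in Hy. destruct (Hlf y Hy) as [A1 A2]. unfold liftpt.
    destruct (excluded_middle_informative (E c (lf y))); [|contradiction]. congruence. }
  split.
  - split; [|split].
    + intros x. unfold liftpt. destruct (excluded_middle_informative (E c x)); [apply Hnn|lra].
    + intros x x' Hx Hx'. destruct (Key x Hx) as [E1 [V1 _]]. destruct (Key x' Hx') as [E2 [V2 _]].
      apply (HTri c); auto.
    + exists (map lf s0). split; auto. split; auto. rewrite map_map. rewrite <- Sum0. apply sumR_ext; auto.
  - apply functional_extensionality. intros y. rewrite (push_eq f _ _ y NL SL). unfold pushsum. rewrite map_map.
    transitivity (sumR (map (fun y' => if excluded_middle_informative (y = y') then v y else 0) s0)).
    + apply sumR_ext. intros y' Hy'. rewrite LV; auto. pose proof Hy' as Hy''. apply Ins0 in Hy''.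
      destruct (Hlf y' Hy'') as [_ F1]. rewrite F1.
      destruct (excluded_middle_informative (y' = y)); destruct (excluded_middle_informative (y = y')); subst; congruence.
    + destruct (in_dec emd y s0) as [I|NI].
      * apply sum_ind_in; auto.
      * rewrite sum_ind_nin; auto. destruct (Req_dec (v y) 0); auto. exfalso; apply NI, Ins0; auto.
Qed.

Lemma rips_nn {A} (E : A -> A -> Prop) w x : rips_pt E w -> 0 <= w x.
Proof. intros [H _]; auto. Qed.

Lemma rips_has_pos {A} (E : A -> A -> Prop) w : rips_pt E w -> exists y, w y > 0.
Proof. intros [Hnn [_ [l [N [S Hs]]]]]. destruct (sum_nz w l) as [y [_ Hy]]; [lra|].
  exists y. pose proof (Hnn y). lra. Qed.

Theorem abstract_cover {A B} (f : A -> B) (E : A -> A -> Prop)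
  (HRefl : forall a, E a a)
  (HInj : forall c a a', E c a -> E c a' -> f a = f a' -> a = a')
  (HTri : forall c a a', E c a -> E c a' -> rel_image f E (f a) (f a') -> E a a')
  (HLift : forall c y, rel_image f E (f c) y -> exists a, E c a /\ f a = y)
  (HSurj : forall y, exists a, f a = y) :
  top_covering (rips_pt E) (rips_open E) (rips_pt (rel_image f E)) (rips_open (rel_image f E)) (push f).
Proof.
  set (E' := rel_image f E).
  assert (LP := fun c v => lift_props f E c v HRefl HInj HTri HLift).
  assert (PV := fun w c x => pushval f E w c x HInj).
  split; [|split; [|split]].
  - intros w Hw. apply push_pt; auto.
  - intros v Hv. destruct (rips_has_pos _ _ Hv) as [y0 Hy0]. destruct (HSurj y0) as [c Hc].
    exists (liftpt f E c v). subst y0. destruct (LP c v Hv ltac:(lra)). auto.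
  -
    intros V [HV1 HV2]. split; [tauto|].
    intros l Hl w [Pw Vw] Sw.
    set (N := nodup emd l).
    assert (NN : NoDup N) by apply NoDup_nodup.
    assert (HN : forall x, In x N <-> In x l) by (intros; apply nodup_In).
    assert (SN : support_in w N) by (intros x Hx; apply HN; auto).
    assert (Hl' : forall y1 y2, In y1 (map f l) -> In y2 (map f l) -> E' y1 y2).
    { intros y1 y2 H1 H2. apply in_map_iff in H1. apply in_map_iff in H2.
      destruct H1 as [x1 [<- I1]]. destruct H2 as [x2 [<- I2]]. exists x1, x2; auto. }
    assert (Sv : support_in (push f w) (map f l)).
    { intros y Hy. destruct (push_nz f w N y NN SN Hy) as [x [Hx [Ex _]]]. subst. apply in_map, HN; auto. }
    destruct (HV2 (map f l) Hl' (push f w) Vw Sv) as [d [Hd Hd']].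
    exists (d / (INR (length N) + 1)). pose proof (pos_INR (length N)) as Hn.
    split. { apply Rdiv_lt_0_compat; lra. }
    intros w' Pw' Sw' Hc. split; auto.
    assert (SN' : support_in w' N) by (intros x Hx; apply HN; auto).
    apply Hd'.
    + apply push_pt; auto.
    + intros y Hy. destruct (push_nz f w' N y NN SN' Hy) as [x [Hx [Ex _]]]. subst. apply in_map, HN; auto.
    + intros y Hy. rewrite (push_eq f w N y NN SN), (push_eq f w' N y NN SN'). unfold pushsum.
      rewrite <- sumR_minus.
      eapply Rle_lt_trans; [apply sum_abs_bound with (M := d / (INR (length N) + 1))|].
      * intros x Hx. destruct (excluded_middle_informative (f x = y)).
        -- left. apply Hc. apply HN; auto.
        -- replace (0 - 0) with 0 by ring. rewrite Rabs_R0. left; apply Rdiv_lt_0_compat; lra.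
      * unfold Rdiv. rewrite <- Rmult_assoc. apply Rmult_lt_reg_r with (INR (length N) + 1); [lra|].
        rewrite Rmult_assoc, Rinv_l; lra.
  - intros v Hv. destruct (rips_has_pos _ _ Hv) as [y0 Hy0].
    exists (fun v' => rips_pt E' v' /\ v' y0 > 0). split; [|split; [split; auto|]].
    + split; [tauto|]. intros l Hl v' [Pv' Hv'] Sv'. exists (v' y0). split; auto.
      intros v'' P'' S'' Hc. split; auto.
      assert (In y0 l) by (apply Sv'; lra). pose proof (Hc y0 H) as Hb. apply Rabs_def2 in Hb. lra.
    + exists (fun U => exists c, f c = y0 /\ U = (fun w => rips_pt E w /\ w c > 0)).
      split; [|split].
      * intros U [c [Hc ->]]. split; [|split; [|split]].
        -- split; [tauto|]. intros l Hl w [Pw Hwc] Sw. exists (w c). split; auto.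
           intros w' P' S' Hcl. split; auto. assert (In c l) by (apply Sw; lra).
           pose proof (Hcl c H) as Hb. apply Rabs_def2 in Hb. lra.
        -- intros w w' [Pw Hw] [Pw' Hw'] Hp. apply functional_extensionality. intros x.
           destruct (Req_dec (w x) 0) as [Z|NZ].
           ++ destruct (Req_dec (w' x) 0) as [Z'|NZ']; [congruence|].
              assert (Ex : E c x) by (destruct Pw' as [_ [Hpair _]]; apply Hpair; lra).
              rewrite <- (PV w c x Pw ltac:(lra) Ex), <- (PV w' c x Pw' ltac:(lra) Ex). congruence.
           ++ assert (Ex : E c x) by (destruct Pw as [_ [Hpair _]]; apply Hpair; lra).
              rewrite <- (PV w c x Pw ltac:(lra) Ex), <- (PV w' c x Pw' ltac:(lra) Ex). congruence.
        -- intros v'. split.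
           ++ intros [Pv' Hv']. exists (liftpt f E c v'). subst y0. destruct (LP c v' Pv' ltac:(lra)) as [L1 L2].
              split; auto. split; auto. unfold liftpt. destruct (excluded_middle_informative (E c c)); [lra|].
              exfalso; auto.
           ++ intros [w [[Pw Hw] <-]]. split; [apply push_pt; auto|].
              subst y0. rewrite (PV w c c Pw ltac:(lra) (HRefl c)). auto.
        -- intros W [HW1 HW2] HWU. split.
           { intros v' [w [Ww <-]]. apply push_pt. apply HW1; auto. }
           intros l' Hl' v' [w [Ww <-]] Sv'.
           destruct (HWU w Ww) as [Pw Hwc].
           assert (Pv : push f w (f c) = w c) by (apply (PV w c c); auto; lra).
           assert (Ic : In (f c) l') by (apply Sv'; lra).
           set (lf := fun y => epsilon (inhabits c) (fun a => E c a /\ f a = y)).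
           assert (Hlf : forall y, In y l' -> E c (lf y) /\ f (lf y) = y).
           { intros y Hy. apply (epsilon_spec (inhabits c) (fun a => E c a /\ f a = y)). apply HLift. apply Hl'; auto. }
           assert (Hl'' : forall x1 x2, In x1 (map lf l') -> In x2 (map lf l') -> E x1 x2).
           { intros x1 x2 H1 H2. apply in_map_iff in H1. apply in_map_iff in H2.
             destruct H1 as [y1 [<- I1]]. destruct H2 as [y2 [<- I2]].
             destruct (Hlf y1 I1) as [A1 B1]. destruct (Hlf y2 I2) as [A2 B2].
             apply (HTri c); auto. rewrite B1, B2. apply Hl'; auto. }
           assert (Sw : support_in w (map lf l')).
           { intros x Hx. assert (Ex : E c x) by (destruct Pw as [_ [Hpair _]]; apply Hpair; lra).
             assert (Hvx : push f w (f x) <> 0) by (rewrite (PV w c x Pw ltac:(lra) Ex); auto).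
             assert (Iy := Sv' _ Hvx). destruct (Hlf _ Iy) as [A1 B1].
             assert (lf (f x) = x) by (apply (HInj c); auto). rewrite <- H. apply in_map; auto. }
           destruct (HW2 (map lf l') Hl'' w Ww Sw) as [d [Hd Hd']].
           exists (Rmin d (w c)). split; [apply Rmin_pos; lra|].
           intros v'' P'' S'' Hc''.
           pose proof (Rmin_l d (w c)). pose proof (Rmin_r d (w c)).
           assert (Pos : v'' (f c) <> 0).
           { pose proof (Hc'' (f c) Ic) as Hb. apply Rabs_def2 in Hb. lra. }
           destruct (LP c v'' P'' Pos) as [L1 L2].
           exists (liftpt f E c v''). split; auto.
           apply Hd'; auto.
           ++ intros x Hx. unfold liftpt in Hx. destruct (excluded_middle_informative (E c x)) as [Ex|]; [|lra].
              assert (Iy := S'' _ Hx). destruct (Hlf _ Iy) as [A1 B1].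
              assert (lf (f x) = x) by (apply (HInj c); auto). rewrite <- H1. apply in_map; auto.
           ++ intros x Hx. apply in_map_iff in Hx. destruct Hx as [y [<- Iy]]. destruct (Hlf y Iy) as [A1 B1].
              unfold liftpt. destruct (excluded_middle_informative (E c (lf y))); [|contradiction].
              rewrite <- (PV w c (lf y) Pw ltac:(lra) A1). rewrite B1.
              pose proof (Hc'' y Iy). lra.
      * intros w. split.
        -- intros [Pw Vw]. pose proof Pw as Pw0. destruct Pw0 as [Hnn [Hpair [l [N [S Hs]]]]].
           destruct (push_nz f w l y0 N S ltac:(lra)) as [x [_ [Ex Wx]]].
           exists (fun w => rips_pt E w /\ w x > 0). split; [exists x; auto|].
           split; [auto|]. pose proof (Hnn x); lra.
        -- intros [U [[c [Hc ->]] [Pw Hw]]]. split; auto. split; [apply push_pt; auto|].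
           subst y0. rewrite (PV w c c Pw ltac:(lra) (HRefl c)). auto.
      * intros U U' [c [Hc ->]] [c' [Hc' ->]] [x [[Px Hx] [Px' Hx']]].
        assert (c = c').
        { apply (HInj c); auto; [|congruence]. destruct Px as [_ [Hpair _]]. apply Hpair; lra. }
        subst. tauto.
Qed.

Lemma surj_pi (X : UniformSpace) (x0 : X) : path_connected X -> forall y, exists C : Xtilde X x0, piX X x0 C = y.
Proof. intros PC y. destruct (PC x0 y) as [a [Ha [H0 H1]]]. exists (mkT X x0 a Ha H0).
  rewrite <- (mem_end _ _ _ _ (mkT_mem X x0 a Ha H0)). auto. Qed.

Lemma pi_ent (X : UniformSpace) (x0 : X) E1 : path_connected X -> unif_loc_path_connected X -> ent X E1 ->
  ent X (rel_image (piX X x0) (Estar X x0 E1)).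
Proof. intros PC UL HE1. destruct (UL E1 HE1) as [F [HF HFp]].
  apply ent_mono with F; auto. intros x y Fxy.
  destruct (HFp x x y (ent_refl _ F HF x) Fxy) as [g [[Hg [G0 G1]] Hgb]].
  destruct (PC x0 x) as [a [Ha [A0 A1]]].
  assert (Cag : path_cont X (pconcat a g)) by (apply cont_concat; auto; congruence).
  assert (Sag : pconcat a g 0 = x0) by (rewrite concat_0; auto).
  exists (mkT X x0 a Ha A0), (mkT X x0 (pconcat a g) Cag Sag). split; [|split].
  - apply Estar_intro with a (pconcat a g) x g; try apply mkT_mem; auto.
    apply D1; auto; congruence.
  - rewrite <- (mem_end _ _ _ _ (mkT_mem X x0 a Ha A0)). auto.
  - rewrite <- (mem_end _ _ _ _ (mkT_mem X x0 _ Cag Sag)). rewrite concat_1; auto.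
Qed.

Lemma rel_image_mono {A B} (f : A -> B) (E E' : A -> A -> Prop) : (forall x y, E x y -> E' x y) ->
  forall y1 y2, rel_image f E y1 y2 -> rel_image f E' y1 y2.
Proof. intros H y1 y2 [a [b [Hab [E1 E2]]]]. exists a, b. auto. Qed.

Lemma if_dir (X : UniformSpace) (x0 : X) : uniform_Poincare X -> uniform_covering (ent_tilde X x0) (ent X) (piX X x0).
Proof. intros [PC [UL [Fs [HFs HS]]]].
  split; [split; [|split]|].
  - apply surj_pi; auto.
  - intros E [E1 [HE1 Hsub]]. eapply ent_mono; [apply (pi_ent X x0 E1); auto|]. apply rel_image_mono; auto.
  - intros F HF. destruct (ent_comp X F HF) as [F1 [HF1 Hc]].
    set (E0 := fun x y => F1 x y /\ F1 y x).
    assert (HE0 : ent X E0) by (apply ent_inter; auto; apply ent_sym; auto).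
    exists (Estar X x0 E0). split; [exists E0; split; auto|].
    intros y1 y2 [C [D [HCD [<- <-]]]].
    destruct (Estar_get _ _ _ _ _ _ _ HCD (rep_mem _ _ C) (rep_mem _ _ D)) as [z [g [Hg [Hz Hh]]]].
    destruct (hom_ends _ _ _ Hh) as [G0 G1]. autorewrite with pth in G0, G1.
    rewrite <- (mem_end _ _ _ _ (rep_mem _ _ C)), <- (mem_end _ _ _ _ (rep_mem _ _ D)).
    rewrite <- G0, <- G1. apply Hc with z; [apply (Hz 0); auto|apply (Hz 1); auto].
  - intros FT [EF [HEF HFT]].
    set (G := fun x y => Fs x y /\ EF x y).
    assert (HG : ent X G) by (apply ent_inter; auto).
    destruct (ent_comp X G HG) as [G1 [HG1 C1]].
    destruct (ent_comp X G1 HG1) as [G2 [HG2 C2]].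
    set (E0 := fun x y => G2 x y /\ G2 y x).
    assert (HE0 : ent X E0) by (apply ent_inter; auto; apply ent_sym; auto).
    assert (Hsm : small X Fs E0).
    { split; auto. split; [intros x y [? ?]; split; auto|].
      intros x y z u v [A _] [B _] [C _] [D _]. apply (C1 x z v); [apply C2 with y|apply C2 with u]; auto. }
    assert (Hsub : forall x y, E0 x y -> EF x y).
    { intros x y [A _]. apply (C1 x y y); [apply C2 with y|apply C2 with y]; auto; apply ent_refl; auto. }
    exists (Estar X x0 E0). split; [exists E0; split; auto|]. split.
    { intros C D H. apply HFT. eapply Estar_mono; [|exact H]. auto. }
    apply abstract_cover.
    + intros; apply Estar_refl; auto.
    + intros c a a' Ha Ha' Hp. apply (Linj X x0 Fs E0); auto.
      apply (Lmain X x0 Fs E0 c); auto. rewrite Hp. exists a', a'. split; auto. apply Estar_refl; auto.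
    + intros c a a' Ha Ha' Hr. apply (Lmain X x0 Fs E0 c); auto.
    + intros c y [D [D' [HDD [P1 P2]]]].
      destruct (Estar_get _ _ _ _ _ _ _ HDD (rep_mem _ _ D) (rep_mem _ _ D')) as [z [g [Hg [Hz Hh]]]].
      destruct (hom_ends _ _ _ Hh) as [G0 G1']. autorewrite with pth in G0, G1'.
      rewrite (mem_end _ _ _ _ (rep_mem _ _ D)) in G0. rewrite (mem_end _ _ _ _ (rep_mem _ _ D')) in G1'.
      pose proof (rep_mem _ _ c) as Rc. destruct (mem_char _ _ _ _ Rc) as [Cc C0].
      pose proof (mem_end _ _ _ _ Rc) as Ec.
      assert (Cag : path_cont X (pconcat (rep X x0 c) g)) by (apply cont_concat; auto; congruence).
      assert (Sag : pconcat (rep X x0 c) g 0 = x0) by (rewrite concat_0; auto).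
      exists (mkT X x0 _ Cag Sag). split.
      * apply Estar_intro with (rep X x0 c) (pconcat (rep X x0 c) g) z g; auto; try apply mkT_mem.
        apply D1; auto; congruence.
      * rewrite <- (mem_end _ _ _ _ (mkT_mem X x0 _ Cag Sag)). rewrite concat_1; congruence.
    + apply surj_pi; auto.
Qed.

Lemma loc_const_cont (g : R -> R) : (forall x, exists d, 0 < d /\ forall y, Rabs (y - x) < d -> g y = g x) -> continuity g.
Proof. intros H x eps Heps. destruct (H x) as [d [Hd Hy]]. exists d; split; auto.
  intros y [_ Hyx]. simpl in *. unfold Rdist in *. rewrite Hy; auto. replace (g x - g x) with 0 by ring.
  rewrite Rabs_R0; lra. Qed.

Definition cl (t : R) := Rmax 0 (Rmin 1 t).
Lemma cl_I01 t : I01 (cl t).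
Proof. unfold cl, I01, Rmax, Rmin. destruct (Rle_dec 1 t); destruct (Rle_dec 0 _); lra. Qed.
Lemma cl_lip t t0 : Rabs (cl t - cl t0) <= Rabs (t - t0).
Proof. unfold cl, Rmax, Rmin. repeat (destruct (Rle_dec _ _)); rabs_elim; lra. Qed.
Lemma cl_id t : I01 t -> cl t = t.
Proof. unfold cl, I01, Rmax, Rmin. intros. repeat (destruct (Rle_dec _ _)); lra. Qed.

Lemma PC_of (X : UniformSpace) (x0 : X) : (forall y, exists C : Xtilde X x0, piX X x0 C = y) -> path_connected X.
Proof. intros Hs x y. destruct (Hs x) as [C <-]. destruct (Hs y) as [D <-].
  pose proof (rep_mem _ _ C) as RC. pose proof (rep_mem _ _ D) as RD.
  destruct (mem_char _ _ _ _ RC) as [C1 C0]. destruct (mem_char _ _ _ _ RD) as [D1 D0].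
  exists (pconcat (rev_path (rep X x0 C)) (rep X x0 D)). split; [apply cont_concat; auto; autorewrite with pth; congruence|].
  autorewrite with pth. split; apply mem_end; auto. Qed.

Lemma ULPC_of (X : UniformSpace) (x0 : X) : (forall E, ent_tilde X x0 E -> ent X (rel_image (piX X x0) E)) ->
  unif_loc_path_connected X.
Proof. intros Hent E HE. destruct (ent_comp X E HE) as [E1' [HE1' Hc]].
  set (E1 := fun x y => E1' x y /\ E1' y x).
  assert (HE1 : ent X E1) by (apply ent_inter; auto; apply ent_sym; auto).
  exists (rel_image (piX X x0) (Estar X x0 E1)). split.
  { apply Hent. exists E1; split; auto. }
  assert (K : forall x y, rel_image (piX X x0) (Estar X x0 E1) x y -> exists z g, path_from X x y g /\ forall t, I01 t -> E1 z (g t)).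
  { intros x y [C [D [HCD [<- <-]]]].
    destruct (Estar_get _ _ _ _ _ _ _ HCD (rep_mem _ _ C) (rep_mem _ _ D)) as [z [g [Hg [Hz Hh]]]].
    destruct (hom_ends _ _ _ Hh) as [G0 G1]. autorewrite with pth in G0, G1.
    exists z, g. refine (conj (conj Hg (conj _ _)) Hz); [rewrite G0|rewrite G1]; apply mem_end; apply rep_mem. }
  intros x y z Hy Hz. destruct (K x y Hy) as [zy [gy [[Cy [Y0 Y1]] By]]]. destruct (K x z Hz) as [zz [gz [[Cz [Z0 Z1]] Bz]]].
  exists (pconcat (rev_path gy) gz). split.
  - split; [apply cont_concat; auto; autorewrite with pth; congruence|]. autorewrite with pth. auto.
  - intros t Ht. unfold ball. destruct (concat_pts _ (rev_path gy) gz t Ht) as [u [Hu [Eu|Eu]]]; rewrite Eu.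
    + unfold rev_path. apply Hc with zy.
      * rewrite <- Y0. exact (proj2 (By 0 I01_0)).
      * exact (proj1 (By (1-u) ltac:(unfold I01 in *; lra))).
    + apply Hc with zz.
      * rewrite <- Z0. exact (proj2 (Bz 0 I01_0)).
      * exact (proj1 (Bz u Hu)).
Qed.

Lemma no_two_sheet {A B} (f : A -> B) (E : A -> A -> Prop) (C C' : A) :
  top_covering (rips_pt E) (rips_open E) (rips_pt (rel_image f E)) (rips_open (rel_image f E)) (push f) ->
  E C C -> E C C' -> E C' C -> E C' C' -> f C = f C' -> C = C'.
Proof. intros Htop ECC ECC' EC'C EC'C' Hf.
  destruct (classic (C = C')) as [|Hne]; auto. exfalso.
  set (wt := fun t => fun c => (if excluded_middle_informative (c = C) then 1 - t else 0) +
                               (if excluded_middle_informative (c = C') then t else 0)).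
  assert (WC : forall t, wt t C = 1 - t).
  { intros t. unfold wt. destruct (excluded_middle_informative (C = C)); [|congruence].
    destruct (excluded_middle_informative (C = C')); [congruence|ring]. }
  assert (WC' : forall t, wt t C' = t).
  { intros t. unfold wt. destruct (excluded_middle_informative (C' = C)); [congruence|].
    destruct (excluded_middle_informative (C' = C')); [ring|congruence]. }
  assert (Wz : forall t c, c <> C -> c <> C' -> wt t c = 0).
  { intros t c H1 H2. unfold wt. destruct (excluded_middle_informative (c = C)); [congruence|].
    destruct (excluded_middle_informative (c = C')); [congruence|ring]. }
  assert (Wnz : forall t c, wt t c <> 0 -> c = C \/ c = C').
  { intros t c H. destruct (classic (c = C)); auto. destruct (classic (c = C')); auto. exfalso; apply H, Wz; auto. }
  set (l := [C; C']).
  assert (Nl : NoDup l). { constructor; [simpl; intuition|constructor; [simpl; auto|constructor]]. }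
  assert (Sl : forall t, support_in (wt t) l). { intros t c H. destruct (Wnz t c H); subst; simpl; auto. }
  assert (Pl : forall c c', In c l -> In c' l -> E c c').
  { intros c c' H1 H2. simpl in H1, H2. destruct H1 as [<-|[<-|[]]]; destruct H2 as [<-|[<-|[]]]; auto. }
  assert (Pw : forall t, I01 t -> rips_pt E (wt t)).
  { intros t Ht. unfold I01 in Ht. split; [|split].
    - intros c. destruct (classic (c = C)); [subst; rewrite WC; lra|].
      destruct (classic (c = C')); [subst; rewrite WC'; lra|]. rewrite Wz; auto; lra.
    - intros c c' H1 H2. apply Pl; apply Sl with t; auto.
    - exists l. split; auto. split; auto. simpl. rewrite WC, WC'. ring. }
  set (v := fun y => if excluded_middle_informative (f C = y) then 1 else 0).
  assert (Pv : forall t, push f (wt t) = v).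
  { intros t. apply functional_extensionality. intros y. rewrite (push_eq f (wt t) l y Nl (Sl t)).
    unfold pushsum, v. simpl. rewrite WC, WC', <- Hf.
    destruct (excluded_middle_informative (f C = y)); ring. }
  destruct Htop as [HP [_ [_ Hloc]]].
  assert (P'v : rips_pt (rel_image f E) v) by (rewrite <- (Pv 0); apply push_pt, Pw; auto).
  destruct (Hloc v P'v) as [V [HVo [Vv [S [HS [Hcov Hdisj]]]]]].
  assert (InS : forall t, I01 t -> exists U, S U /\ U (wt t)).
  { intros t Ht. apply Hcov. split; auto. rewrite Pv; auto. }
  destruct (InS 0 I01_0) as [U0 [SU0 U0w]].
  set (chi := fun t => if excluded_middle_informative (U0 (wt (cl t))) then 1 else 0).
  assert (Hloc2 : forall t0, exists d, 0 < d /\ forall y, Rabs (y - t0) < d -> chi y = chi t0).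
  { intros t0. destruct (InS (cl t0) (cl_I01 t0)) as [U1 [SU1 U1w]].
    destruct (HS U1 SU1) as [[_ Ho] _].
    destruct (Ho l Pl (wt (cl t0)) U1w (Sl _)) as [d [Hd Hd']].
    exists d. split; auto. intros y Hy.
    assert (U1y : U1 (wt (cl y))).
    { apply Hd'; [apply Pw, cl_I01|apply Sl|]. pose proof (cl_lip y t0).
      intros c Hc. simpl in Hc. destruct Hc as [<-|[<-|[]]].
      - rewrite !WC. replace (1 - cl y - (1 - cl t0)) with (-(cl y - cl t0)) by ring. rewrite Rabs_Ropp. lra.
      - rewrite !WC'. lra. }
    unfold chi. destruct (excluded_middle_informative (U0 (wt (cl y)))) as [A1|A1];
    destruct (excluded_middle_informative (U0 (wt (cl t0)))) as [A2|A2]; auto.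
    - exfalso. apply A2. apply (Hdisj U1 U0 SU1 SU0); eauto.
    - exfalso. apply A1. apply (Hdisj U1 U0 SU1 SU0); eauto. }
  assert (Hc0 : chi 0 = 1).
  { unfold chi. rewrite cl_id; auto. destruct (excluded_middle_informative (U0 (wt 0))); tauto. }
  destruct (classic (U0 (wt 1))) as [U01|N01].
  - destruct (HS U0 SU0) as [_ [Hinj _]].
    assert (E01 : wt 0 = wt 1) by (apply Hinj; auto; rewrite !Pv; auto).
    assert (wt 0 C = wt 1 C) by (rewrite E01; auto). rewrite !WC in H. lra.
  - assert (Hc1 : chi 1 = 0).
    { unfold chi. rewrite cl_id; auto. destruct (excluded_middle_informative (U0 (wt 1))); tauto. }
    assert (Cg : continuity (fun t => 1/2 - chi t)).
    { apply loc_const_cont. intros x. destruct (Hloc2 x) as [d [Hd Hd']]. exists d. split; auto.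
      intros y Hy. rewrite Hd'; auto. }
    destruct (IVT (fun t => 1/2 - chi t) 0 1 Cg ltac:(lra) ltac:(cbv beta; rewrite Hc0; lra) ltac:(cbv beta; rewrite Hc1; lra)) as [z [_ Hz]].
    unfold chi in Hz. destruct (excluded_middle_informative _); lra.
Qed.

Lemma USLSC_of (X : UniformSpace) (x0 : X) : uniform_covering (ent_tilde X x0) (ent X) (piX X x0) ->
  unif_semiloc_simply_connected X.
Proof. intros [[Hs [Hent Hgen]] Hcov].
  destruct (Hcov (fun _ _ => True)) as [E [[E1 [HE1 Hsub]] [_ Htop]]].
  { exists (fun _ _ => True). split; [apply ent_full|auto]. }
  exists E1. split; auto. intros x al [Ca [A0 A1]] Hball.
  destruct (Hs x) as [C HC].
  pose proof (rep_mem _ _ C) as RC. destruct (mem_char _ _ _ _ RC) as [Cb B0].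
  pose proof (mem_end _ _ _ _ RC) as B1. rewrite HC in B1.
  set (b := rep X x0 C) in *.
  assert (Cba : path_cont X (pconcat b al)) by (apply cont_concat; auto; congruence).
  assert (Sba : pconcat b al 0 = x0) by (rewrite concat_0; auto).
  set (C' := mkT X x0 _ Cba Sba).
  assert (HE : Estar X x0 E1 C C').
  { apply Estar_intro with b (pconcat b al) x al; auto. apply mkT_mem. apply D1; auto; congruence. }
  assert (Heq : C = C').
  { apply (no_two_sheet (piX X x0) E C C' Htop).
    - apply Hsub, Estar_refl; auto.
    - apply Hsub; auto.
    - apply Hsub, Estar_sym; auto.
    - apply Hsub, Estar_refl; auto.
    - unfold C'. rewrite HC, <- (mem_end _ _ _ _ (mkT_mem X x0 _ Cba Sba)). rewrite concat_1; auto. }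
  assert (Hm : proj1_sig C (pconcat b al)) by (rewrite Heq; apply mkT_mem).
  pose proof (mem_hom _ _ C _ _ Hm RC) as Hh.
  eapply hom_trans; [apply hom_sym, (D1 X b al); auto; congruence|].
  eapply hom_trans; [apply hom_concat; [autorewrite with pth; congruence|apply hom_refl; auto|exact Hh]|].
  rewrite <- B1. apply hom_cancel_l; auto.
Qed.

Theorem main_equiv (X : UniformSpace) (x0 : X) :
  uniform_covering (ent_tilde X x0) (ent X) (piX X x0) <-> uniform_Poincare X.
Proof. split.
  - intros H. pose proof H as [[Hs [Hent _]] _]. split; [apply (PC_of X x0); auto|split].
    + apply (ULPC_of X x0); auto.
    + apply (USLSC_of X x0); auto.
  - apply if_dir.
Qed.

Theorem mainTheorem6 (X : UniformSpace) (x0 : X) :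
  uniform_covering (ent_tilde X x0) (ent X) (piX X x0) <-> uniform_Poincare X.
Proof. exact (main_equiv X x0). Qed.
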